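(* Let $L$ be an $n$-dimensional nilpotent Lie algebra with $\dim L^2=1$, and let $m\ge 1$ be the integer such that $L\cong H(m)\oplus A(n-2m-1)$. Then \[\mathcal{M}^{(2)}(L)\cong\begin{cases} A\!\left(\tfrac{1}{3}n(n-1)(n-2)\right) & \text{if } m>1,\\[2pt] A\!\left(\tfrac{1}{3}n(n-1)(n-2)+3\right) & \text{if } m=1.\end{cases}\]
   Context: All Lie algebras are over a fixed field. For a Lie algebra $L$ with free presentation $L\cong F/R$, the $2$-nilpotent multiplier is $\mathcal{M}^{(2)}(L)=(R\cap F^{3})/[[R,F],F]$, where $F^3=[[F,F],F]$. $A(k)$ denotes the abelian Lie algebra of dimension $k$. The Heisenberg Lie algebra $H(m)$ is the Lie algebra of dimension $2m+1$ with $H(m)^2=Z(H(m))$ and $\dim H(m)^2=1$. Every finite dimensional nilpotent Lie algebra $L$ with $\dim L^2=1$ is isomorphic to $H(m)\oplus A(n-2m-1)$ for a unique $m\ge1$. *)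

(* Defs.v *)
From HB Require Import structures.
From mathcomp Require Import all_boot all_order all_algebra.
Set Implicit Arguments. Unset Strict Implicit. Unset Printing Implicit Defensive.
Import GRing.Theory.
Local Open Scope ring_scope.

(* A Lie algebra over a field K: a K-vector space with a bilinear,
   alternating bracket satisfying the Jacobi identity.
   No finiteness assumption (free Lie algebras are infinite dimensional). *)
Record lie_algebra (K : fieldType) := LieAlg {
  lcar :> lmodType K;
  lbr : lcar -> lcar -> lcar;
  lbr_linl : forall (a : K) (x y z : lcar), lbr (a *: x + y) z = a *: lbr x z + lbr y z;
  lbr_linr : forall (a : K) (x y z : lcar), lbr z (a *: x + y) = a *: lbr z x + lbr z y;
  lbr_alt : forall x : lcar, lbr x x = 0;
  lbr_jacobi : forall x y z : lcar,
      lbr x (lbr y z) + lbr y (lbr z x) + lbr z (lbr x y) = 0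
}.

Definition setT_ (T : Type) : T -> Prop := fun _ => True.
Arguments setT_ : clear implicits.

Section Defs.
Variable K : fieldType.

Section Lin.
Variable V : lmodType K.

Definition span (S : V -> Prop) : V -> Prop :=
  fun v => exists (d : nat) (c : 'I_d -> K) (x : 'I_d -> V),
      (forall i, S (x i)) /\ v = \sum_(i < d) c i *: x i.

(* dim (U / W) = d, for subspaces W <= U : there are d vectors of U, linearly
   independent modulo W, which together with W span U. *)
Definition quot_dim (U W : V -> Prop) (d : nat) : Prop :=
  exists x : 'I_d -> V,
    (forall i, U (x i)) /\
    (forall c : 'I_d -> K, W (\sum_(i < d) c i *: x i) -> forall i, c i = 0) /\
    (forall u, U u -> exists (c : 'I_d -> K) (w : V), W w /\ u = \sum_(i < d) c i *: x i + w).

Definition sdim (U : V -> Prop) (d : nat) : Prop := quot_dim U (fun v => v = 0) d.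

End Lin.


Section Lie.
Variable L : lie_algebra K.

Definition brS (A B : L -> Prop) : L -> Prop :=
  span (fun v => exists a b, A a /\ B b /\ v = lbr a b).

Fixpoint lcs (k : nat) : L -> Prop :=
  match k with
  | 0 => setT_ L
  | 1 => setT_ L
  | k'.+1 => brS (lcs k') (setT_ L)
  end.

Definition nilpotent : Prop := exists c, forall v, lcs c v -> v = 0.

Definition L2 : L -> Prop := lcs 2.
Definition L3 : L -> Prop := lcs 3.

End Lie.

Definition lie_hom (L M : lie_algebra K) (f : L -> M) : Prop :=
  (forall (a : K) (x y : L), f (a *: x + y) = a *: f x + f y) /\
  (forall x y : L, f (lbr x y) = lbr (f x) (f y)).

Definition free_on (F : lie_algebra K) (X : Type) (iota : X -> F) : Prop :=
  forall (M : lie_algebra K) (f : X -> M),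
    exists g : F -> M, lie_hom g /\ (forall x, g (iota x) = f x) /\
      (forall g' : F -> M, lie_hom g' -> (forall x, g' (iota x) = f x) ->
         forall v, g' v = g v).

(* ---------- H(m) (+) A(k) on K^(2m+1+k), written K^((m+m+k).+1) ----------
   basis x_1..x_m, y_1..y_m (coordinates 0..2m-1), z (coordinate 2m),
   and k central coordinates; the only nonzero brackets are [x_i, y_i] = z. *)
Definition heis_form (m k : nat) (u v : 'rV[K]_(m + m + k).+1) : K :=
  \sum_(i < m) (u 0 (inord i) * v 0 (inord (m + i))
                 - u 0 (inord (m + i)) * v 0 (inord i)).

Definition heis_z (m k : nat) : 'rV[K]_(m + m + k).+1 :=
  \row_(j < (m + m + k).+1) (if val j == (m + m)%N then 1 else 0).

Definition heis_br (m k : nat) (u v : 'rV[K]_(m + m + k).+1) : 'rV[K]_(m + m + k).+1 :=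
  heis_form u v *: heis_z m k.

Definition iso_heis_ab (L : lie_algebra K) (m k : nat) : Prop :=
  exists f : L -> 'rV[K]_(m + m + k).+1,
    bijective f /\
    (forall (a : K) (x y : L), f (a *: x + y) = a *: f x + f y) /\
    (forall x y : L, f (lbr x y) = heis_br (f x) (f y)).

(* For a free presentation L = F/R (pi : F -> L surjective, R = ker pi),
   M^(2)(L) = (R cap F^3) / [[R,F],F] is isomorphic to the abelian Lie algebra
   A(d): the bracket on the quotient vanishes and its dimension is d. *)
Definition two_nil_mult_abelian_of_dim (L : lie_algebra K) (F : lie_algebra K)
    (pi : F -> L) (d : nat) : Prop :=
  let R : F -> Prop := fun v => pi v = 0 in
  let RF3 : F -> Prop := fun v => R v /\ L3 v in
  let RFF : F -> Prop := brS (brS R (setT_ F)) (setT_ F) in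
  (forall a b, RF3 a -> RF3 b -> RFF (lbr a b)) /\ quot_dim RF3 RFF d.

End Defs.

Arguments L2 {K} L.
Arguments L3 {K} L.
Arguments lcs {K} L k.
Arguments nilpotent {K} L.
Arguments brS {K} L A B.

(* Main.v *)
Require Import Defs.
From HB Require Import structures.
From mathcomp Require Import all_boot all_order all_algebra.
From mathcomp Require Import ring zify.

Module Aux.
Set Implicit Arguments. Unset Strict Implicit. Unset Printing Implicit Defensive.

Lemma cnt_gt (j d : nat) : \sum_(0 <= i < d) (j < i) = d - j.+1.
Proof. elim: d => [|d IH]; first by rewrite big_nil. rewrite big_nat_recr //= IH; case: (ltnP j d) => h /=; lia. Qed.
Lemma cnt_ge (j d : nat) : \sum_(0 <= i < d) (j <= i) = d - j.
Proof. elim: d => [|d IH]; first by rewrite big_nil. rewrite big_nat_recr //= IH; case: (leqP j d) => h /=; lia. Qed.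
Lemma sum_tt (d : nat) : 3 * \sum_(0 <= t < d) (t * t.+1) = d.+1 * d * d.-1.
Proof.
elim: d => [|d IH]; first by rewrite big_nil.
rewrite big_nat_recr //= mulnDr IH; case: d IH => [|d] IH //=; nia.
Qed.

Lemma sum_pair (I J : finType) (F : I * J -> nat) : \sum_p F p = \sum_i \sum_j F (i, j).
Proof. by rewrite pair_bigA; apply: eq_bigr => -[]. Qed.

Lemma count_hall (d : nat) :
  3 * #|[set t : 'I_d * 'I_d * 'I_d | (t.1.2 < t.1.1) && (t.1.2 <= t.2)]| = d.+1 * d * d.-1.
Proof.
rewrite -sum1_card big_mkcond /= sum_pair /=.
under eq_bigr => p _ do rewrite /=.
rewrite sum_pair /= exchange_big /=.
have E : forall j : 'I_d, \sum_(i < d) \sum_(l < d)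
   (if ((i, j), l) \in [set t : 'I_d * 'I_d * 'I_d | (t.1.2 < t.1.1) && (t.1.2 <= t.2)] then 1 else 0)
    = (d - j.+1) * (d - j).
  move=> j.
  transitivity (\sum_(i < d) ((j < i) * \sum_(l < d) (j <= l))).
    apply: eq_bigr => i _; rewrite big_distrr /=; apply: eq_bigr => l _.
    by rewrite inE /=; case: (j < i); case: (j <= l).
  rewrite -big_distrl /= mulnC.
  rewrite -(big_mkord xpredT (fun l => (j <= l) : nat)) -(big_mkord xpredT (fun i => (j < i) : nat)).
  by rewrite cnt_gt cnt_ge mulnC.
rewrite (eq_bigr _ (fun j _ => E j)) -(big_mkord xpredT (fun j => (d - j.+1) * (d - j))).
rewrite big_nat_rev /= -sum_tt; congr (3 * _).
apply: eq_big_nat => t /andP[_ ht]; rewrite add0n.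
have -> : d - (d - t.+1).+1 = t by lia.
by have -> : d - (d - t.+1) = t.+1 by lia.
Qed.

Import GRing.Theory.
Local Open Scope ring_scope.

Section Gen.
Variable K : fieldType.

Section LieLemmas.
Variable L : lie_algebra K.
Implicit Types x y z : L.

Lemma lbr0l z : lbr 0 z = 0 :> L.
Proof. by have := lbr_linl (-1) 0 0 z; rewrite scaler0 addr0 scaleN1r addNr. Qed.
Lemma lbr0r z : lbr z 0 = 0 :> L.
Proof. by have := lbr_linr (-1) 0 0 z; rewrite scaler0 addr0 scaleN1r addNr. Qed.
Lemma lbrDl x y z : lbr (x + y) z = lbr x z + lbr y z.
Proof. by have := lbr_linl 1 x y z; rewrite !scale1r. Qed.
Lemma lbrDr x y z : lbr z (x + y) = lbr z x + lbr z y.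
Proof. by have := lbr_linr 1 x y z; rewrite !scale1r. Qed.
Lemma lbrZl a x z : lbr (a *: x) z = a *: lbr x z.
Proof. by have := lbr_linl a x 0 z; rewrite !addr0 lbr0l addr0. Qed.
Lemma lbrZr a x z : lbr z (a *: x) = a *: lbr z x.
Proof. by have := lbr_linr a x 0 z; rewrite !addr0 lbr0r addr0. Qed.
Lemma lbrNl x z : lbr (- x) z = - lbr x z.
Proof. by rewrite -scaleN1r lbrZl scaleN1r. Qed.
Lemma lbrNr x z : lbr z (- x) = - lbr z x.
Proof. by rewrite -scaleN1r lbrZr scaleN1r. Qed.
Lemma lbrBl x y z : lbr (x - y) z = lbr x z - lbr y z.
Proof. by rewrite lbrDl lbrNl. Qed.
Lemma lbrBr x y z : lbr z (x - y) = lbr z x - lbr z y.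
Proof. by rewrite lbrDr lbrNr. Qed.
Lemma lbr_anti x y : lbr x y = - lbr y x.
Proof.
have := lbr_alt (x + y); rewrite lbrDl !lbrDr !lbr_alt add0r addr0.
by move/eqP; rewrite addr_eq0 => /eqP.
Qed.
Lemma lbr_suml (I : Type) (r : seq I) (P : pred I) (F : I -> L) z :
  lbr (\sum_(i <- r | P i) F i) z = \sum_(i <- r | P i) lbr (F i) z.
Proof. by apply: (big_morph (fun v => lbr v z)); [move=> ? ?; exact: lbrDl|exact: lbr0l]. Qed.
Lemma lbr_sumr (I : Type) (r : seq I) (P : pred I) (F : I -> L) z :
  lbr z (\sum_(i <- r | P i) F i) = \sum_(i <- r | P i) lbr z (F i).
Proof. by apply: (big_morph (fun v => lbr z v)); [move=> ? ?; exact: lbrDr|exact: lbr0r]. Qed.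
Lemma lbr_swap (u a b : L) : lbr (lbr u b) a = lbr (lbr u a) b + lbr u (lbr b a).
Proof.
rewrite [lbr (lbr u b) a]lbr_anti [lbr (lbr u a) b]lbr_anti [lbr u a]lbr_anti lbrNr opprK.
apply/eqP; rewrite eq_sym -subr_eq0 opprK [X in X + _]addrC.
by rewrite lbr_jacobi.
Qed.
End LieLemmas.

Section SpanLemmas.
Variable V : lmodType K.
Implicit Types (S P : V -> Prop).

Lemma span_ind S P : P 0 -> (forall a x y, P x -> P y -> P (a *: x + y)) ->
  (forall x, S x -> P x) -> forall v, Defs.span S v -> P v.
Proof.
move=> P0 PZD PS v [d [c [x [Sx ->]]]].
elim: d c x Sx => [|d IH] c x Sx; first by rewrite big_ord0.
rewrite big_ord_recr /= addrC; apply: PZD; first exact: PS.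
exact: (IH (fun i => c (widen_ord (leqnSn d) i)) (fun i => x (widen_ord (leqnSn d) i))).
Qed.

Lemma span_sub S x : S x -> Defs.span S x.
Proof.
move=> Sx; exists 1%N, (fun _ => 1), (fun _ => x); split => //.
by rewrite big_ord1 scale1r.
Qed.

Lemma span0 S : Defs.span S 0.
Proof. by exists 0%N, (fun _ => 0), (fun _ => 0); split; [case|rewrite big_ord0]. Qed.

Lemma spanZD S a x y : Defs.span S x -> Defs.span S y -> Defs.span S (a *: x + y).
Proof.
move=> [d1 [c1 [x1 [S1 ->]]]] [d2 [c2 [x2 [S2 ->]]]].
exists (d1 + d2)%N, (fun i => match split i with inl j => a * c1 j | inr j => c2 j end),
  (fun i => match split i with inl j => x1 j | inr j => x2 j end); split.
  by move=> i; case: (split i).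
rewrite big_split_ord /= scaler_sumr; congr (_ + _); apply: eq_bigr => i _.
  by rewrite (unsplitK (inl i)) scalerA.
by rewrite (unsplitK (inr i)).
Qed.

Lemma spanD S x y : Defs.span S x -> Defs.span S y -> Defs.span S (x + y).
Proof. by move=> ? ?; rewrite -[x]scale1r; apply: spanZD. Qed.
Lemma spanZ S a x : Defs.span S x -> Defs.span S (a *: x).
Proof. by move=> ?; rewrite -[_ *: _]addr0; apply: spanZD => //; apply: span0. Qed.
Lemma spanN S x : Defs.span S x -> Defs.span S (- x).
Proof. by move=> ?; rewrite -scaleN1r; apply: spanZ. Qed.
Lemma spanB S x y : Defs.span S x -> Defs.span S y -> Defs.span S (x - y).
Proof. by move=> ? ?; apply: spanD => //; apply: spanN. Qed.
Lemma span_sum S (I : Type) (r : seq I) (P : pred I) (F : I -> V) :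
  (forall i, P i -> Defs.span S (F i)) -> Defs.span S (\sum_(i <- r | P i) F i).
Proof.
move=> H; elim/big_rec: _ => [|i x Pi Sx]; first exact: span0.
by apply: spanD => //; apply: H.
Qed.
Lemma span_span S v : Defs.span (Defs.span S) v -> Defs.span S v.
Proof.
apply: span_ind; [exact: span0| by move=> *; apply: spanZD|done].
Qed.
End SpanLemmas.

End Gen.

Section Tens.
Variable K : fieldType.
Variable d : nat.
Definition Wd := (('I_d + ('I_d * 'I_d)) + (('I_d*'I_d*'I_d) + ('I_d*'I_d*'I_d*'I_d)))%type.
Definition C := {ffun Wd -> K^o}.
Definition c1 (a : C) i : K := a (inl (inl i)).
Definition c2 (a : C) i j : K := a (inl (inr (i, j))).
Definition c3 (a : C) i j k : K := a (inr (inl (i, j, k))).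
Definition c4 (a : C) i j k l : K := a (inr (inr (i, j, k, l))).
Definition deg (w : Wd) : nat :=
  match w with inl (inl _) => 1 | inl (inr _) => 2 | inr (inl _) => 3 | inr (inr _) => 4 end.
Definition brraw (a b : C) (w : Wd) : K :=
  match w with
  | inl (inl _) => 0
  | inl (inr (i, j)) => c1 a i * c1 b j - c1 b i * c1 a j
  | inr (inl (i, j, k)) => (c1 a i * c2 b j k + c2 a i j * c1 b k)
                           - (c1 b i * c2 a j k + c2 b i j * c1 a k)
  | inr (inr (i, j, k, l)) => (c1 a i * c3 b j k l + c2 a i j * c2 b k l + c3 a i j k * c1 b l)
                           - (c1 b i * c3 a j k l + c2 b i j * c2 a k l + c3 b i j k * c1 a l)
  end.
Definition brD (D : nat) (a b : C) : C :=
  [ffun w => if (deg w <= D)%N then (brraw a b w : K^o) else 0].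

Lemma scaleKo (x y : K^o) : x *: y = (x * y : K).
Proof. by []. Qed.

Variable D : nat.
Lemma brD_linl (a : K) (x y z : C) : brD D (a *: x + y) z = a *: brD D x z + brD D y z.
Proof.
apply/ffunP => w; rewrite !ffunE; case: ifP => _; last by rewrite scaler0 addr0.
case: w => [[i|[i j]]|[[[i j] k]|[[[i j] k] l]]];
  rewrite /= /c1 /c2 /c3 /c4 ?ffunE ?scaleKo /=; ring.
Qed.
Lemma brD_linr (a : K) (x y z : C) : brD D z (a *: x + y) = a *: brD D z x + brD D z y.
Proof.
apply/ffunP => w; rewrite !ffunE; case: ifP => _; last by rewrite scaler0 addr0.
case: w => [[i|[i j]]|[[[i j] k]|[[[i j] k] l]]];
  rewrite /= /c1 /c2 /c3 /c4 ?ffunE ?scaleKo /=; ring.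
Qed.
Lemma brD_alt (x : C) : brD D x x = 0.
Proof.
apply/ffunP => w; rewrite !ffunE; case: ifP => _ //.
case: w => [[i|[i j]]|[[[i j] k]|[[[i j] k] l]]]; rewrite /=; ring.
Qed.
Lemma brD_jacobi (x y z : C) :
  brD D x (brD D y z) + brD D y (brD D z x) + brD D z (brD D x y) = 0.
Proof.
apply/ffunP => w; rewrite !ffunE; case: ifP => Hw; last by rewrite !addr0.
case: w Hw => [[i|[i j]]|[[[i j] k]|[[[i j] k] l]]] /= Hw.
- ring.
- have h1 : (1 <= D)%N := leq_trans (isT : (1 <= 2)%N) Hw.
  rewrite /c1 /c2 /c3 /c4 !ffunE /= ?h1; ring.
- have h1 : (1 <= D)%N := leq_trans (isT : (1 <= 3)%N) Hw.
  have h2 : (2 <= D)%N := leq_trans (isT : (2 <= 3)%N) Hw.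
  rewrite /c1 /c2 /c3 /c4 !ffunE /= ?h1 ?h2 /c1 /c2; ring.
- have h1 : (1 <= D)%N := leq_trans (isT : (1 <= 4)%N) Hw.
  have h2 : (2 <= D)%N := leq_trans (isT : (2 <= 4)%N) Hw.
  have h3 : (3 <= D)%N := leq_trans (isT : (3 <= 4)%N) Hw.
  rewrite /c1 /c2 /c3 /c4 !ffunE /= ?h1 ?h2 ?h3 /c1 /c2 /c3; ring.
Qed.

Definition CL : lie_algebra K := LieAlg brD_linl brD_linr brD_alt brD_jacobi.

Section Formulas.
Implicit Types a b A B X Y Z : C.
Lemma c1br a b i : c1 (brD D a b) i = 0.
Proof. by rewrite /c1 ffunE /=; case: ifP. Qed.
Lemma c2br a b i j : c2 (brD D a b) i j =
  if (2 <= D)%N then c1 a i * c1 b j - c1 b i * c1 a j else 0.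
Proof. by rewrite /c2 ffunE. Qed.
Lemma c3br a b i j k : c3 (brD D a b) i j k =
  if (3 <= D)%N then (c1 a i * c2 b j k + c2 a i j * c1 b k)
                           - (c1 b i * c2 a j k + c2 b i j * c1 a k) else 0.
Proof. by rewrite /c3 ffunE. Qed.
Lemma c4br a b i j k l : c4 (brD D a b) i j k l =
  if (4 <= D)%N then (c1 a i * c3 b j k l + c2 a i j * c2 b k l + c3 a i j k * c1 b l)
                           - (c1 b i * c3 a j k l + c2 b i j * c2 a k l + c3 b i j k * c1 a l) else 0.
Proof. by rewrite /c4 ffunE. Qed.

Lemma c2br3 A B Z i j : c2 (brD D (brD D A B) Z) i j = 0.
Proof. rewrite c2br !c1br; case: ifP => _ //; ring. Qed.

Lemma c3br3 A B Z i j k : (3 <= D)%N -> c3 (brD D (brD D A B) Z) i j k =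
  c1 A i * c1 B j * c1 Z k - c1 B i * c1 A j * c1 Z k
  - c1 Z i * c1 A j * c1 B k + c1 Z i * c1 B j * c1 A k.
Proof.
move=> h3; have h2 : (2 <= D)%N := leq_trans (isT : (2 <= 3)%N) h3.
rewrite c3br h3 !c2br h2 !c1br; ring.
Qed.

Lemma c3br4 A B Z Y i j k : c3 (brD D (brD D (brD D A B) Z) Y) i j k = 0.
Proof. rewrite c3br !c2br3 !c1br; case: ifP => _ //; ring. Qed.

Lemma c4br4 A B Z Y i j k l : (4 <= D)%N ->
  c4 (brD D (brD D (brD D A B) Z) Y) i j k l =
  c3 (brD D (brD D A B) Z) i j k * c1 Y l - c1 Y i * c3 (brD D (brD D A B) Z) j k l.
Proof. move=> h4; rewrite c4br h4 !c2br3 !c1br; ring. Qed.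

Lemma c3kill X A B i j k : (forall i, c1 X i = 0) -> c3 (brD D (brD D X A) B) i j k = 0.
Proof.
move=> hX; rewrite c3br !c2br !c1br !hX; case: ifP => _ //; case: ifP => _; ring.
Qed.

Lemma c4kill X A B i j k l : (forall i, c1 X i = 0) -> (forall i j, c2 X i j = 0) ->
   c4 (brD D (brD D X A) B) i j k l = 0.
Proof.
move=> hX hX2; rewrite c4br !c3br !c2br !c1br !hX !hX2.
by case: ifP => _ //; case: ifP => _; case: ifP => _; ring.
Qed.

Lemma c2z U B i j : (forall i, c1 U i = 0) -> c2 (brD D U B) i j = 0.
Proof. by move=> h1; rewrite c2br !h1; case: ifP => _ //; ring. Qed.
Lemma c3z U B i j k : (forall i, c1 U i = 0) -> (forall i j, c2 U i j = 0) ->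
  c3 (brD D U B) i j k = 0.
Proof. by move=> h1 h2; rewrite c3br !h1 !h2; case: ifP => _ //; ring. Qed.
Lemma c4z U B i j k l : (forall i, c1 U i = 0) -> (forall i j, c2 U i j = 0) ->
  (forall i j k, c3 U i j k = 0) -> c4 (brD D U B) i j k l = 0.
Proof. by move=> h1 h2 h3; rewrite c4br !h1 !h2 !h3; case: ifP => _ //; ring. Qed.

Lemma c1_lin (al : K) x y i : c1 (al *: x + y) i = al * c1 x i + c1 y i.
Proof. by rewrite /c1 !ffunE. Qed.
Lemma c2_lin (al : K) x y i j : c2 (al *: x + y) i j = al * c2 x i j + c2 y i j.
Proof. by rewrite /c2 !ffunE. Qed.
Lemma c3_lin (al : K) x y i j k : c3 (al *: x + y) i j k = al * c3 x i j k + c3 y i j k.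
Proof. by rewrite /c3 !ffunE. Qed.
Lemma c4_lin (al : K) x y i j k l : c4 (al *: x + y) i j k l = al * c4 x i j k l + c4 y i j k l.
Proof. by rewrite /c4 !ffunE. Qed.
Lemma c1_0 i : c1 0 i = 0. Proof. by rewrite /c1 ffunE. Qed.
Lemma c2_0 i j : c2 0 i j = 0. Proof. by rewrite /c2 ffunE. Qed.
Lemma c3_0 i j k : c3 0 i j k = 0. Proof. by rewrite /c3 ffunE. Qed.
Lemma c4_0 i j k l : c4 0 i j k l = 0. Proof. by rewrite /c4 ffunE. Qed.
End Formulas.

Definition trunc (D1 : nat) (a : C) : C := [ffun w => if (deg w <= D1)%N then a w else 0].
Lemma trunc_lin D1 (al : K) (x y : C) : trunc D1 (al *: x + y) = al *: trunc D1 x + trunc D1 y.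
Proof.
apply/ffunP => w; rewrite !ffunE; case: ifP => _; last by rewrite scaler0 addr0.
by rewrite ?ffunE.
Qed.
Lemma trunc_br D1 D2 (a b : C) : (D1 <= D2)%N ->
  trunc D1 (brD D2 a b) = brD D1 (trunc D1 a) (trunc D1 b).
Proof.
move=> hD; apply/ffunP => w; rewrite !ffunE; case: ifP => Hw //.
rewrite (leq_trans Hw hD).
case: w Hw => [[i|[i j]]|[[[i j] k]|[[[i j] k] l]]] /= Hw //.
- have h1 : (1 <= D1)%N := leq_trans (isT : (1 <= 2)%N) Hw.
  by rewrite /c1 !ffunE /= h1.
- have h1 : (1 <= D1)%N := leq_trans (isT : (1 <= 3)%N) Hw.
  have h2 : (2 <= D1)%N := leq_trans (isT : (2 <= 3)%N) Hw.
  by rewrite /c1 /c2 !ffunE /= h1 h2.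
- have h1 : (1 <= D1)%N := leq_trans (isT : (1 <= 4)%N) Hw.
  have h2 : (2 <= D1)%N := leq_trans (isT : (2 <= 4)%N) Hw.
  have h3 : (3 <= D1)%N := leq_trans (isT : (3 <= 4)%N) Hw.
  by rewrite /c1 /c2 /c3 !ffunE /= h1 h2 h3.
Qed.
End Tens.

Section LinFun.
Variable K : fieldType.
Variables U V : lmodType K.
Variable h : U -> V.
Hypothesis hlin : forall (a : K) (x y : U), h (a *: x + y) = a *: h x + h y.
Lemma lin0 : h 0 = 0.
Proof. by have := hlin (-1) 0 0; rewrite scaler0 addr0 scaleN1r addNr. Qed.
Lemma linD x y : h (x + y) = h x + h y.
Proof. by have := hlin 1 x y; rewrite !scale1r. Qed.
Lemma linZ a x : h (a *: x) = a *: h x.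
Proof. by have := hlin a x 0; rewrite !addr0 lin0 addr0. Qed.
Lemma linN x : h (- x) = - h x.
Proof. by rewrite -scaleN1r linZ scaleN1r. Qed.
Lemma linB x y : h (x - y) = h x - h y.
Proof. by rewrite linD linN. Qed.
Lemma lin_sum (I : Type) (r : seq I) (P : pred I) (G : I -> U) :
  h (\sum_(i <- r | P i) G i) = \sum_(i <- r | P i) h (G i).
Proof. by apply: (big_morph h); [move=> ? ?; exact: linD|exact: lin0]. Qed.
End LinFun.

Section Main.
Variable K : fieldType.
Variable L : lie_algebra K.
Variables m k : nat.
Hypothesis m1 : (1 <= m)%N.
Local Notation N := (m + m + k).+1.
Local Notation d := (m + m + k)%N.
Variable f : L -> 'rV[K]_N.
Variable g : 'rV[K]_N -> L.
Hypothesis fK : cancel f g.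
Hypothesis gK : cancel g f.
Hypothesis flin : forall (a : K) (x y : L), f (a *: x + y) = a *: f x + f y.
Hypothesis fbr : forall x y : L, f (lbr x y) = heis_br (f x) (f y).
Variable F : lie_algebra K.
Variable pi : F -> L.
Hypothesis pihom : lie_hom pi.
Variable fp : 'I_N -> F.
Hypothesis fpE : forall p, pi (fp p) = g 'e_p.

Lemma zN_lt : (m + m < N)%N. Proof. by rewrite ltnS leq_addr. Qed.
Definition zN : 'I_N := Ordinal zN_lt.
Definition idx (i : 'I_d) : 'I_N := lift zN i.

Lemma pilin : forall (a : K) (x y : F), pi (a *: x + y) = a *: pi x + pi y.
Proof. by case: pihom. Qed.
Lemma pibr : forall x y : F, pi (lbr x y) = lbr (pi x) (pi y).
Proof. by case: pihom. Qed.

Definition R (v : F) : Prop := pi v = 0.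
Definition RF := brS F R (setT_ F).
Definition RFF := brS F RF (setT_ F).

Lemma finj : injective f. Proof. exact: can_inj fK. Qed.

Lemma R_lbrl r a : R r -> R (lbr r a).
Proof. by rewrite /R pibr => ->; rewrite lbr0l. Qed.

Lemma RF_gen r a : R r -> RF (lbr r a).
Proof. by move=> Rr; apply: span_sub; exists r, a. Qed.
Lemma RFF_ofRF u b : RF u -> RFF (lbr u b).
Proof. by move=> Ru; apply: span_sub; exists u, b. Qed.
Lemma RFF_gen r a b : R r -> RFF (lbr (lbr r a) b).
Proof. by move=> Rr; apply/RFF_ofRF/RF_gen. Qed.
Lemma RFF_r1 r a b : R r -> RFF (lbr r (lbr a b)).
Proof.
move=> Rr; have := lbr_swap r b a; move/eqP; rewrite addrC -subr_eq eq_sym => /eqP ->.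
by apply: spanB; apply: RFF_gen.
Qed.
Lemma RFF_r3 r a b : R r -> RFF (lbr (lbr a b) r).
Proof.
move=> Rr; rewrite lbr_anti [lbr a b]lbr_anti lbrNr opprK; exact: RFF_r1.
Qed.
Lemma RFF_l2 r a b : R r -> RFF (lbr (lbr a r) b).
Proof. by move=> Rr; rewrite [lbr a r]lbr_anti lbrNl; apply: spanN; apply: RFF_gen. Qed.

Definition sec (al : L) : F := \sum_(p < N) f al 0 p *: fp p.
Lemma pi_sec al : pi (sec al) = al.
Proof.
apply: finj; rewrite /sec (lin_sum pilin) (lin_sum flin).
rewrite [RHS]row_sum_delta; apply: eq_bigr => p _.
by rewrite (linZ pilin) (linZ flin) fpE gK.
Qed.
Lemma R_sec a : R (a - sec (pi a)).
Proof. by rewrite /R (linB pilin) pi_sec subrr. Qed.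

Definition T p q r := lbr (lbr (fp p) (fp q)) (fp r).

Lemma Tcyc p q r : T p q r = - T q r p - T r p q.
Proof.
have := lbr_jacobi (fp p) (fp q) (fp r).
rewrite [lbr (fp p) (lbr _ _)]lbr_anti [lbr (fp q) (lbr _ _)]lbr_anti
  [lbr (fp r) (lbr _ _)]lbr_anti -/(T q r p) -/(T r p q) -/(T p q r).
move/eqP; rewrite -!opprD oppr_eq0 => /eqP J.
by rewrite -[T p q r](addKr (T q r p + T r p q)) J addr0 opprD.
Qed.
Lemma Tanti p q r : T p q r = - T q p r.
Proof. by rewrite /T [lbr (fp p) _]lbr_anti lbrNl. Qed.

Lemma sec2 (al be : L) : lbr (sec al) (sec be) =
  \sum_(p < N) \sum_(q < N) (f al 0 p * f be 0 q) *: lbr (fp p) (fp q).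
Proof.
rewrite /sec lbr_suml; apply: eq_bigr => p _.
rewrite lbrZl lbr_sumr scaler_sumr; apply: eq_bigr => q _.
by rewrite lbrZr scalerA.
Qed.
Lemma sec3 (al be ga : L) : lbr (lbr (sec al) (sec be)) (sec ga) =
  \sum_(p < N) \sum_(q < N) \sum_(r < N) (f al 0 p * f be 0 q * f ga 0 r) *: T p q r.
Proof.
rewrite sec2 lbr_suml; apply: eq_bigr => p _.
rewrite lbr_suml; apply: eq_bigr => q _.
rewrite lbrZl /sec lbr_sumr scaler_sumr; apply: eq_bigr => r _.
by rewrite lbrZr scalerA.
Qed.

Lemma telescope3 (V : zmodType) (x u v y : V) : (x - u) + (u - v) + (v - y) = x - y.
Proof. by rewrite !addrA !subrK. Qed.

Lemma reduce3 a b c : RFF (lbr (lbr a b) c - lbr (lbr (sec (pi a)) (sec (pi b))) (sec (pi c))).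
Proof.
set a' := sec (pi a); set b' := sec (pi b); set c' := sec (pi c).
rewrite -(telescope3 _ (lbr (lbr a' b) c) (lbr (lbr a' b') c)).
have -> : lbr (lbr a b) c - lbr (lbr a' b) c = lbr (lbr (a - a') b) c by rewrite !lbrBl.
have -> : lbr (lbr a' b) c - lbr (lbr a' b') c = lbr (lbr a' (b - b')) c by rewrite lbrBr lbrBl.
have -> : lbr (lbr a' b') c - lbr (lbr a' b') c' = lbr (lbr a' b') (c - c') by rewrite lbrBr.
apply: spanD; first apply: spanD.
- exact: RFF_gen (R_sec a).
- exact: RFF_l2 (R_sec b).
- exact: RFF_r3 (R_sec c).
Qed.

Lemma L3_ind (P : F -> Prop) : P 0 -> (forall a x y, P x -> P y -> P (a *: x + y)) ->
  (forall x y z, P (lbr (lbr x y) z)) -> forall u, L3 F u -> P u.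
Proof.
move=> P0 PZD Pg u; rewrite /L3 /=.
apply: span_ind => // v [a [c [Ha [_ ->]]]].
move: c; move: a Ha; apply: (@span_ind _ _ _ (fun a => forall c, P (lbr a c))) => [c|al x y Hx Hy c|w [x [y [_ [_ ->]]]] c].
- by rewrite lbr0l.
- by rewrite lbr_linl; apply: PZD.
- exact: Pg.
Qed.

Lemma inord_val (p : nat) : (p < N)%N -> \val (inord p : 'I_N) = p.
Proof. by move=> h; rewrite /= inordK. Qed.

Lemma heis_form_z (s : K) (w : 'rV[K]_N) : heis_form (s *: heis_z K m k) w = 0.
Proof.
rewrite /heis_form big1 // => i _; rewrite !mxE.
have hi : (i < N)%N by rewrite ltnS; apply: (leq_trans (ltnW (ltn_ord i))); rewrite -addnA leq_addr.
have hmi : (m + i < N)%N by rewrite ltnS -addnA leq_add2l (leq_trans (ltnW (ltn_ord i))) // leq_addr.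
rewrite !inord_val //.
have h1 : (i == m + m :> nat) = false by apply/negbTE; rewrite neq_ltn (leq_trans (ltn_ord i)) // leq_addr.
have h2 : (m + i == m + m :> nat) = false by rewrite eqn_add2l; apply/negbTE; rewrite neq_ltn ltn_ord.
by rewrite h1 h2 !mulr0 !mul0r subrr.
Qed.

Lemma R_F3 u : L3 F u -> R u.
Proof.
apply: L3_ind; rewrite /R.
- exact: (lin0 pilin).
- by move=> a x y hx hy; rewrite pilin hx hy scaler0 addr0.
move=> x y z; apply: finj; rewrite !pibr fbr fbr /heis_br heis_form_z scale0r.
by rewrite (lin0 flin).
Qed.

Lemma RF3_br a b : R a -> L3 F b -> RFF (lbr a b).
Proof.
move=> Ra; move: b; apply: (@L3_ind (fun b => RFF (lbr a b))).
- by rewrite lbr0r; apply: span0.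
- by move=> al x y Hx Hy; rewrite lbr_linr; apply: spanZD.
- by move=> x y z; apply: RFF_r1.
Qed.

Section Spanning.
Variable D : nat.
Variable xs : 'I_D -> F.
Definition Q (u : F) := exists c : 'I_D -> K, RFF (u - \sum_i c i *: xs i).

Lemma Q0 : Q 0.
Proof.
exists (fun _ => 0); rewrite big1 ?subrr; first exact: span0.
by move=> i _; rewrite scale0r.
Qed.
Lemma QZD a u v : Q u -> Q v -> Q (a *: u + v).
Proof.
move=> [c1 H1] [c2 H2]; exists (fun i => a * c1 i + c2 i).
have -> : a *: u + v - \sum_i (a * c1 i + c2 i) *: xs i =
   a *: (u - \sum_i c1 i *: xs i) + (v - \sum_i c2 i *: xs i).
  rewrite scalerBr scaler_sumr.
  under eq_bigr do rewrite scalerDl -scalerA.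
  rewrite big_split /= opprD !addrA; congr (_ + _); rewrite -!addrA; congr (_ + _).
  by rewrite addrC.
exact: spanZD.
Qed.
Lemma QD u v : Q u -> Q v -> Q (u + v).
Proof. by move=> ? ?; rewrite -[u]scale1r; apply: QZD. Qed.
Lemma QZ a u : Q u -> Q (a *: u).
Proof. by move=> ?; rewrite -[_ *: _]addr0; apply: QZD => //; apply: Q0. Qed.
Lemma QN u : Q u -> Q (- u).
Proof. by move=> ?; rewrite -scaleN1r; apply: QZ. Qed.
Lemma QB u v : Q u -> Q v -> Q (u - v).
Proof. by move=> ? ?; apply: QD => //; apply: QN. Qed.
Lemma Q_sum (I : Type) (r : seq I) (P : pred I) (G : I -> F) :
  (forall i, P i -> Q (G i)) -> Q (\sum_(i <- r | P i) G i).
Proof.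
move=> H; elim/big_rec: _ => [|i x Pi Sx]; first exact: Q0.
by apply: QD => //; apply: H.
Qed.
Lemma Q_RFF u v : RFF (u - v) -> Q v -> Q u.
Proof.
move=> H [c Hc]; exists c; rewrite -(subrK v u) -addrA; exact: spanD.
Qed.
Lemma Q_RFF0 u : RFF u -> Q u.
Proof. by move=> H; apply: (Q_RFF (v := 0)); rewrite ?subr0 //; apply: Q0. Qed.
Lemma Q_xs i : Q (xs i).
Proof.
exists (fun j => (j == i)%:R); rewrite (bigD1 i) //= eqxx scale1r big1 ?addr0 ?subrr.
  exact: span0.
by move=> j /negbTE ->; rewrite scale0r.
Qed.

Definition hall (i j l : 'I_d) := (j < i)%N && (j <= l)%N.
Hypothesis Qhall : forall i j l, hall i j l -> Q (T (idx i) (idx j) (idx l)).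
Hypothesis Qz : forall q r, Q (T zN q r).

Lemma Q_T p q r : Q (T p q r).
Proof.
have H1 : forall i j l : 'I_d, (j < i)%N -> Q (T (idx i) (idx j) (idx l)).
  move=> i j l ji; case: (leqP j l) => jk; first by apply: Qhall; rewrite /hall ji jk.
  rewrite Tcyc [T (idx l) (idx i) (idx j)]Tanti opprK.
  by apply: QD; [apply: QN|]; apply: Qhall; rewrite /hall; apply/andP; split; lia.
have H2 : forall i j l : 'I_d, Q (T (idx i) (idx j) (idx l)).
  move=> i j l; case: (ltngtP j i) => ij; first exact: H1.
    by rewrite Tanti; apply: QN; apply: H1.
  have -> : i = j by apply: val_inj.
  by rewrite /T lbr_alt lbr0l; apply: Q0.
case: (unliftP zN p) => [i ->|->]; last exact: Qz.
case: (unliftP zN q) => [j ->|->]; last by rewrite Tanti; apply: QN.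
case: (unliftP zN r) => [l ->|->]; last first.
  by rewrite Tcyc Tanti opprK; apply: QB.
exact: H2.
Qed.

Lemma Q_F3 u : L3 F u -> Q u.
Proof.
apply: L3_ind; [exact: Q0|by move=> *; apply: QZD|].
move=> x y z; apply: (Q_RFF (reduce3 x y z)).
rewrite sec3; apply: Q_sum => p _; apply: Q_sum => q _; apply: Q_sum => r _.
by apply: QZ; apply: Q_T.
Qed.
End Spanning.

Definition hf (p q : 'I_N) : K := heis_form ('e_p : 'rV[K]_N) 'e_q.
Definition xN (t : nat) : 'I_N := inord t.
Definition yN (t : nat) : 'I_N := inord (m + t).

Lemma heis_z_delta : heis_z K m k = 'e_zN.
Proof.
apply/rowP => j; rewrite !mxE eqxx /=.
by case: (j =P zN) => [->|/eqP]; [rewrite eqxx|rewrite -val_eqE /= => /negbTE ->].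
Qed.

Lemma hf0 (p q : 'I_N) : ~~((p < m)%N && (q == m + p :> nat)) ->
  ~~((q < m)%N && (p == m + q :> nat)) -> hf p q = 0.
Proof.
move=> H1 H2; rewrite /hf /heis_form big1 // => i _; rewrite !mxE eqxx /=.
have hi : (i < N)%N by rewrite ltnS; apply: (leq_trans (ltnW (ltn_ord i))); rewrite -addnA leq_addr.
have hmi : (m + i < N)%N by rewrite ltnS -addnA leq_add2l (leq_trans (ltnW (ltn_ord i))) // leq_addr.
rewrite -!val_eqE !inord_val //.
have a : ((i == p :> nat) && (m + i == q :> nat)) = false.
  apply/negbTE; apply: contra H1 => /andP[/eqP <- /eqP <-]; by rewrite ltn_ord eqxx.
have b : ((m + i == p :> nat) && (i == q :> nat)) = false.
  apply/negbTE; apply: contra H2 => /andP[/eqP <- /eqP <-]; by rewrite ltn_ord eqxx.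
move: a b; do 4 case: (_ == _) => //=; move=> *; rewrite ?mulr0 ?mul0r ?mulr1 ?subrr //.
Qed.

Lemma hf1 (t : nat) : (t < m)%N -> hf (xN t) (yN t) = 1.
Proof.
move=> tm.
have ht : (t < N)%N by rewrite ltnS; apply: (leq_trans (ltnW tm)); rewrite -addnA leq_addr.
have hmt : (m + t < N)%N by rewrite ltnS -addnA leq_add2l (leq_trans (ltnW tm)) // leq_addr.
rewrite /hf /heis_form (bigD1 (Ordinal tm)) //= big1 ?addr0.
  rewrite !mxE eqxx /= -!val_eqE !inord_val //= eqxx.
  have -> : (m + t == t)%N = false by apply/negbTE; lia.
  by rewrite eqxx mulr1 mul0r subr0.
move=> i /negP ne; rewrite !mxE eqxx /= -!val_eqE.
have hi : (i < N)%N by rewrite ltnS; apply: (leq_trans (ltnW (ltn_ord i))); rewrite -addnA leq_addr.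
have hmi : (m + i < N)%N by rewrite ltnS -addnA leq_add2l (leq_trans (ltnW (ltn_ord i))) // leq_addr.
rewrite !inord_val //.
have -> : (i == t :> nat) = false.
  by apply/negbTE; apply/negP => /eqP E; apply: ne; apply/eqP; apply: val_inj.
have -> : (m + i == t :> nat) = false by apply/negbTE; lia.
by rewrite /= mul0r mul0r subrr.
Qed.

Lemma Rr p q : R (lbr (fp p) (fp q) - hf p q *: fp zN).
Proof.
rewrite /R; apply: finj; rewrite (linB pilin) (linZ pilin) pibr !fpE.
rewrite (linB flin) (linZ flin) fbr !gK /heis_br heis_z_delta -/(hf p q).
by rewrite subrr (lin0 flin).
Qed.

Lemma RN v : R v -> R (- v).
Proof. by rewrite /R (linN pilin) => ->; rewrite oppr0. Qed.

Lemma R_br0 p q : hf p q = 0 -> R (lbr (fp p) (fp q)).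
Proof. by move=> h; have := Rr p q; rewrite h scale0r subr0. Qed.

Definition Wt t := lbr (fp (xN t)) (fp (yN t)).

Lemma RF_W t (p : 'I_N) : (t < m)%N -> (p != t :> nat) -> (p != m + t :> nat) ->
  RF (lbr (Wt t) (fp p)).
Proof.
move=> tm h1 h2.
have ht : (t < N)%N by rewrite ltnS; apply: (leq_trans (ltnW tm)); rewrite -addnA leq_addr.
have hmt : (m + t < N)%N by rewrite ltnS -addnA leq_add2l (leq_trans (ltnW tm)) // leq_addr.
rewrite /Wt -/(T _ _ _) Tcyc; apply: spanB; [apply: spanN|]; apply: RF_gen; apply: R_br0;
  apply: hf0; rewrite /xN /yN !inord_val //; apply/negP; lia.
Qed.

Lemma Tz_W t (q r : 'I_N) : (t < m)%N -> RFF (T zN q r - lbr (lbr (Wt t) (fp q)) (fp r)).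
Proof.
move=> tm; rewrite /T -!lbrBl; apply: RFF_gen.
have := Rr (xN t) (yN t); rewrite hf1 // scale1r -/(Wt t) => /RN.
by rewrite opprB addrC.
Qed.

Lemma Qz_big (m2 : (1 < m)%N) D (xs : 'I_D -> F) (q r : 'I_N) : Q xs (T zN q r).
Proof.
pose t := if (q == 0 :> nat) || (q == m :> nat) then 1%N else 0%N.
have tm : (t < m)%N by rewrite /t; case: ifP => _ //; lia.
apply: (Q_RFF (Tz_W q r tm)); apply: Q_RFF0; apply: RFF_ofRF; apply: RF_W => //;
  rewrite /t; case: ifP => /=; lia.
Qed.

Definition U (q r : 'I_N) := lbr (lbr (Wt 0) (fp q)) (fp r).

Lemma Qz_one (m_1 : m = 1%N) D (xs : 'I_D -> F) :
  (forall q r : 'I_N, (q < 2)%N -> (r < 2)%N -> (q <= r)%N -> Q xs (U q r)) ->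
  forall q r : 'I_N, Q xs (T zN q r).
Proof.
move=> QU q r; have tm : (0 < m)%N by rewrite m_1.
apply: (Q_RFF (Tz_W q r tm)); rewrite -/(U q r).
have h01 : (xN 0 = 0 :> nat) /\ (yN 0 = 1 :> nat).
  by rewrite /xN /yN !inord_val // m_1 //; lia.
case: (ltnP q 2) => hq; last first.
  by apply: Q_RFF0; apply: RFF_ofRF; apply: RF_W => //; lia.
case: (ltnP r 2) => hr; last first.
  rewrite /U lbr_swap; apply: Q_RFF0; apply: spanD.
    by apply: RFF_ofRF; apply: RF_W => //; lia.
  rewrite /Wt; apply: RFF_r3; apply: R_br0; apply: hf0; apply/negP; lia.
case: (leqP q r) => hqr; first exact: QU.
case: h01 => h0 h1.
have Eq : q = yN 0 by apply: val_inj => /=; lia.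
have Er : r = xN 0 by apply: val_inj => /=; lia.
rewrite /U lbr_swap Eq Er -/(Wt 0) [lbr (fp (yN 0)) _]lbr_anti -/(Wt 0) lbrNr lbr_alt oppr0 addr0.
by apply: QU; lia.
Qed.

Variable X : Type.
Variable iota : X -> F.
Hypothesis free : free_on iota.

Lemma trunc_unique dd D1 D2 (hD : (D1 <= D2)%N) (phi : F -> CL K dd D2) (ell : L -> C K dd) :
  lie_hom phi ->
  (forall (a : K) (x y : L), ell (a *: x + y) = a *: ell x + ell y) ->
  (forall x y : L, ell (lbr x y) = brD D1 (ell x) (ell y)) ->
  (forall x, trunc D1 (ell x) = ell x) ->
  (forall x, phi (iota x) = ell (pi (iota x))) ->
  forall v, trunc D1 (phi v) = ell (pi v).
Proof.
move=> [phil phib] elll ellb ellt phii.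
have [G [_ [_ Gu]]] := free (fun x => (ell (pi (iota x)) : CL K dd D1)).
have E1 := Gu (fun v => trunc D1 (phi v)).
have E2 := Gu (fun v => ell (pi v)).
move=> v; rewrite E1 ?E2 //.
- split => [a x y|x y] /=; first by rewrite pilin elll.
  by rewrite pibr ellb.
- split => [a x y|x y] /=; first by rewrite phil trunc_lin.
  by rewrite phib /= trunc_br.
- by move=> x /=; rewrite phii ellt.
Qed.

Lemma phi_lin dd D2 (phi : F -> CL K dd D2) : lie_hom phi ->
  forall (a : K) (x y : F), phi (a *: x + y) = a *: phi x + phi y.
Proof. by case. Qed.
Lemma phi_br dd D2 (phi : F -> CL K dd D2) : lie_hom phi ->
  forall x y : F, phi (lbr x y) = brD D2 (phi x) (phi y).
Proof. by case. Qed.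

Definition ellA (al : L) : C K d :=
  [ffun w => match w with inl (inl i) => (f al 0 (idx i) : K^o) | _ => 0 end].

Variable phiA : F -> CL K d 4.
Hypothesis homA : lie_hom phiA.
Hypothesis phiA_iota : forall x, phiA (iota x) = ellA (pi (iota x)).

Lemma c1A v i : c1 (phiA v) i = f (pi v) 0 (idx i).
Proof.
have := trunc_unique (isT : (1 <= 4)%N) homA _ _ _ phiA_iota v.
move=> /(_ _ _ _)/ffunP/(_ (inl (inl i))); rewrite /c1 !ffunE /= => -> //.
- by move=> a x y; apply/ffunP => -[[i'|[i' j']]|[[[i' j'] k']|[[[i' j'] k'] l']]];
    rewrite !ffunE //= ?flin ?mxE ?scaler0 ?addr0.
- move=> x y; apply/ffunP => -[[i'|[i' j']]|[[[i' j'] k']|[[[i' j'] k'] l']]];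
    rewrite !ffunE //=.
  rewrite fbr /heis_br heis_z_delta !mxE eqxx /=.
  by rewrite eq_sym (negbTE (neq_lift zN i')) mulr0.
- by move=> x; apply/ffunP => -[[i'|[i' j']]|[[[i' j'] k']|[[[i' j'] k'] l']]];
    rewrite !ffunE //=.
Qed.

Lemma e_entry (p q : 'I_N) : ('e_p : 'rV[K]_N) 0 q = (q == p)%:R.
Proof. by rewrite mxE eqxx /= eq_sym. Qed.

Lemma c1A_fp (a i : 'I_d) : c1 (phiA (fp (idx a))) i = (i == a :> nat)%:R.
Proof. by rewrite c1A fpE gK e_entry (inj_eq (@lift_inj _ zN)). Qed.

Lemma c1A_R r i : R r -> c1 (phiA r) i = 0.
Proof. by move=> Rr; rewrite c1A Rr (lin0 flin) mxE. Qed.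

Lemma A_RF u : RF u -> (forall i, c1 (phiA u) i = 0) /\ (forall i j, c2 (phiA u) i j = 0).
Proof.
move: u; apply: (@span_ind _ _ _ (fun u => (forall i, c1 (phiA u) i = 0) /\ (forall i j, c2 (phiA u) i j = 0))).
- by rewrite (lin0 (phi_lin homA)); split => *; rewrite ?c1_0 ?c2_0.
- move=> a x y [h1 h2] [h3 h4]; rewrite (phi_lin homA); split => *;
    by rewrite ?c1_lin ?c2_lin ?h1 ?h2 ?h3 ?h4 mulr0 addr0.
- move=> v [r [a [Rr [_ ->]]]]; rewrite (phi_br homA); split => *; first exact: c1br.
  by apply: c2z => i; apply: c1A_R.
Qed.

Lemma A_RFF v : RFF v -> forall i j l, c3 (phiA v) i j l = 0.
Proof.
move: v; apply: (@span_ind _ _ _ (fun v => forall i j l, c3 (phiA v) i j l = 0)).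
- by move=> *; rewrite (lin0 (phi_lin homA)) c3_0.
- by move=> a x y h1 h2 i j l; rewrite (phi_lin homA) c3_lin h1 h2 mulr0 addr0.
- move=> v [u [b [Ru [_ ->]]]] i j l; rewrite (phi_br homA).
  by have [h1 h2] := A_RF Ru; apply: c3z.
Qed.

Lemma prod3 (a b c : bool) : (a%:R * b%:R * c%:R : K) = (a && b && c)%:R.
Proof. by case: a; case: b; case: c; rewrite /= ?mulr1 ?mul1r ?mulr0 ?mul0r. Qed.

Ltac decide_bools :=
  repeat match goal with
   | |- context [ (nat_of_bool ?b)%:R ] =>
       first [ rewrite (_ : b = false); last (apply/negP; move=> /andP[/andP[/eqP ? /eqP ?] /eqP ?]; lia)
             | rewrite (_ : b = true); last (apply/andP; split; [apply/andP; split|]; apply/eqP; lia) ]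
   end.

Lemma A_priv1 (i j l i' j' l' : 'I_d) : hall i j l -> hall i' j' l' -> (j < l)%N ->
  c3 (phiA (T (idx i') (idx j') (idx l'))) j i l =
  if (i' == i :> nat) && (j' == j :> nat) && (l' == l :> nat) then -1 else 0.
Proof.
rewrite /hall => /andP[h1 h2] /andP[h3 h4] h5.
rewrite /T !(phi_br homA) c3br3 // !c1A_fp !prod3.
case: ifP => [/andP[/andP[/eqP e1 /eqP e2] /eqP e3]|/negP HC]; decide_bools; rewrite /=; ring.
Qed.

Lemma A_priv2 (i j l i' j' l' : 'I_d) : hall i j l -> hall i' j' l' -> (j = l :> nat) ->
  c3 (phiA (T (idx i') (idx j') (idx l'))) j j i =
  if (i' == i :> nat) && (j' == j :> nat) && (l' == l :> nat) then 1 else 0.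
Proof.
rewrite /hall => /andP[h1 h2] /andP[h3 h4] h5.
rewrite /T !(phi_br homA) c3br3 // !c1A_fp !prod3.
case: ifP => [/andP[/andP[/eqP e1 /eqP e2] /eqP e3]|/negP HC]; decide_bools; rewrite /=; ring.
Qed.

Section One.
Hypothesis m_1 : m = 1%N.

Lemma sum_nat_m1 (G : nat -> K) : \sum_(i < m) G i = G 0%N.
Proof. by rewrite -(big_mkord xpredT) m_1 big_nat1. Qed.

Lemma hform1 (u v : 'rV[K]_N) :
  heis_form u v = u 0 (xN 0) * v 0 (yN 0) - u 0 (yN 0) * v 0 (xN 0).
Proof.
rewrite /heis_form (sum_nat_m1 (fun i => u 0 (inord i) * v 0 (inord (m + i)) - u 0 (inord (m + i)) * v 0 (inord i))).
by [].
Qed.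

Lemma N_gt2 : (2 < N)%N. Proof. rewrite m_1; by []. Qed.
Lemma yN0 : yN 0 = inord 1.
Proof.
have h1 : (m + 0 < N)%N by lia.
have h2 : (1 < N)%N by lia.
by apply: val_inj; rewrite /yN !inord_val //; lia.
Qed.

Definition ellB (al : L) : C K 2 :=
  [ffun w : Wd 2 => match w return K^o with
   | inl (inl i) => f al 0 (inord i)
   | inl (inr (i, j)) => f al 0 zN * (((i == 0 :> nat) && (j == 1 :> nat))%:R
                                    - ((i == 1 :> nat) && (j == 0 :> nat))%:R)
   | _ => 0 end].

Variable phiB : F -> CL K 2 4.
Hypothesis homB : lie_hom phiB.
Hypothesis phiB_iota : forall x, phiB (iota x) = ellB (pi (iota x)).

Lemma inord2 (i : 'I_2) : \val (inord i : 'I_N) = i.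
Proof. have := ltn_ord i; have := N_gt2; move=> *; rewrite inord_val //; lia. Qed.

Lemma ellB_trunc :
  (forall v, trunc 2 (phiB v) = ellB (pi v)).
Proof.
apply: (trunc_unique (isT : (2 <= 4)%N) homB _ _ _ phiB_iota).
- move=> a x y; apply/ffunP => -[[i'|[i' j']]|[[[i' j'] k']|[[[i' j'] k'] l']]]; rewrite !ffunE /=.
  all: rewrite ?flin ?mxE ?scaler0 ?addr0 //.
  by rewrite scaleKo; ring.
- move=> x y; apply/ffunP => -[[i'|[i' j']]|[[[i' j'] k']|[[[i' j'] k'] l']]];
    rewrite !ffunE //=.
  + rewrite fbr /heis_br heis_z_delta !mxE eqxx /=.
    have -> : (inord i' == zN) = false.
      by apply/negbTE; rewrite -val_eqE inord2 /=; have := ltn_ord i'; lia.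
    by rewrite mulr0.
  + rewrite fbr /heis_br heis_z_delta !mxE eqxx eqxx /= mulr1 hform1 /c1 !ffunE /=.
    rewrite yN0 /xN.
    case: i' => [[|[|?]] hi] //; case: j' => [[|[|?]] hj] //=; rewrite /=; ring.
- by move=> x; apply/ffunP => -[[i'|[i' j']]|[[[i' j'] k']|[[[i' j'] k'] l']]];
    rewrite !ffunE //=.
Qed.

Lemma c1B v i : c1 (phiB v) i = f (pi v) 0 (inord i).
Proof. by have := ellB_trunc v => /ffunP/(_ (inl (inl i))); rewrite !ffunE /=. Qed.
Lemma c2B v i j : c2 (phiB v) i j = f (pi v) 0 zN * (((i == 0 :> nat) && (j == 1 :> nat))%:R
                                    - ((i == 1 :> nat) && (j == 0 :> nat))%:R).
Proof. by have := ellB_trunc v => /ffunP/(_ (inl (inr (i, j)))); rewrite !ffunE /=. Qed.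

Lemma B_RF u : RF u -> [/\ (forall i, c1 (phiB u) i = 0), (forall i j, c2 (phiB u) i j = 0)
   & (forall i j l, c3 (phiB u) i j l = 0)].
Proof.
move: u; apply: (@span_ind _ _ _ (fun u => [/\ (forall i, c1 (phiB u) i = 0), (forall i j, c2 (phiB u) i j = 0)
   & (forall i j l, c3 (phiB u) i j l = 0)])).
- by rewrite (lin0 (phi_lin homB)); split => *; rewrite ?c1_0 ?c2_0 ?c3_0.
- move=> a x y [h1 h2 h3] [h4 h5 h6]; rewrite (phi_lin homB); split => *;
    by rewrite ?c1_lin ?c2_lin ?c3_lin ?h1 ?h2 ?h3 ?h4 ?h5 ?h6 mulr0 addr0.
- move=> v [r [a [Rr [_ ->]]]]; rewrite (phi_br homB).
  have r1 : forall i, c1 (phiB r) i = 0 by move=> i; rewrite c1B Rr (lin0 flin) mxE.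
  have r2 : forall i j, c2 (phiB r) i j = 0 by move=> i j; rewrite c2B Rr (lin0 flin) mxE mul0r.
  split => *; [exact: c1br| exact: c2z| exact: c3z].
Qed.

Lemma B_RFF v : RFF v -> forall i j l o, c4 (phiB v) i j l o = 0.
Proof.
move: v; apply: (@span_ind _ _ _ (fun v => forall i j l o, c4 (phiB v) i j l o = 0)).
- by move=> *; rewrite (lin0 (phi_lin homB)) c4_0.
- by move=> a x y h1 h2 i j l o; rewrite (phi_lin homB) c4_lin h1 h2 mulr0 addr0.
- move=> v [u [b [Ru [_ ->]]]] i j l o; rewrite (phi_br homB).
  by have [h1 h2 h3] := B_RF Ru; apply: c4z.
Qed.

Lemma c1B_x i : c1 (phiB (fp (xN 0))) i = (i == 0 :> nat)%:R.
Proof.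
rewrite c1B fpE gK e_entry -val_eqE inord2 /xN inord_val //; lia.
Qed.
Lemma c1B_y i : c1 (phiB (fp (yN 0))) i = (i == 1 :> nat)%:R.
Proof.
rewrite c1B fpE gK e_entry -val_eqE inord2 yN0 inord_val //; have := N_gt2; lia.
Qed.

Definition o0 : 'I_2 := ord0.
Definition o1 : 'I_2 := ord_max.

Lemma B_val (q r : 'I_N) (w1 w2 w3 w4 : 'I_2) :
  c4 (phiB (U q r)) w1 w2 w3 w4 =
  c4 (brD 4 (brD 4 (brD 4 (phiB (fp (xN 0))) (phiB (fp (yN 0)))) (phiB (fp q))) (phiB (fp r))) w1 w2 w3 w4.
Proof. by rewrite /U /Wt !(phi_br homB). Qed.

Definition xyv (t : nat) : 'I_N := if t == 0%N then xN 0 else yN 0.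
Definition Uext (e : 'I_3) : F :=
  U (xyv (e == 2 :> nat)) (xyv (e != 0 :> nat)).
Definition wext (e : 'I_3) : 'I_2 * 'I_2 * 'I_2 * 'I_2 :=
  if e == 0 :> nat then (o1, o0, o0, o0) else if e == 1 :> nat then (o0, o0, o1, o1)
  else (o0, o1, o1, o1).

Lemma Uext_val (e e' : 'I_3) :
  c4 (phiB (Uext e)) (wext e').1.1.1 (wext e').1.1.2 (wext e').1.2 (wext e').2 =
  if e == e' then (if e == 2 :> nat then 1 else -1) else 0.
Proof.
rewrite /Uext B_val // c4br4 // !c3br3 //.
case: e => [[|[|[|?]]] he] //; case: e' => [[|[|[|?]]] he'] //;
  rewrite /xyv /wext /= !c1B_x !c1B_y /= ?mulr0 ?mul0r ?mulr1 ?mul1r ?subr0 ?sub0r ?addr0 ?add0r ?oppr0 ?opprK //; ring.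
Qed.
End One.

Lemma A_U q r i j l : c3 (phiA (U q r)) i j l = 0.
Proof. by rewrite /U /Wt !(phi_br homA) c3br4. Qed.

Definition trip := ('I_d * 'I_d * 'I_d)%type.
Definition hallt (t : trip) := hall t.1.1 t.1.2 t.2.
Definition HT : {set trip} := [set t | hallt t].
Definition Th (t : trip) := T (idx t.1.1) (idx t.1.2) (idx t.2).
Definition pw (t : trip) : trip :=
  if (t.1.2 < t.2)%N then (t.1.2, t.1.1, t.2) else (t.1.2, t.1.2, t.1.1).
Definition sgn (t : trip) : K := if (t.1.2 < t.2)%N then -1 else 1.

Lemma sgn_neq0 t : sgn t != 0.
Proof. by rewrite /sgn; case: ifP => _; rewrite ?oppr_eq0 oner_eq0. Qed.

Lemma priv_val t t' : hallt t -> hallt t' ->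
  c3 (phiA (Th t')) (pw t).1.1 (pw t).1.2 (pw t).2 = if t' == t then sgn t else 0.
Proof.
case: t => [[i j] l]; case: t' => [[i' j'] l']; rewrite /hallt /pw /sgn /Th /= => h h'.
case: ifP => hjl.
  by rewrite (A_priv1 h h').
have ejl : (j = l :> nat) by move: h; rewrite /hall; lia.
by rewrite (A_priv2 h h').
Qed.

Lemma ev_sum (V : lmodType K) (lam : V -> K^o)
  (hl : forall (a : K) (x y : V), lam (a *: x + y) = a *: lam x + lam y)
  D (c : 'I_D -> K) (x : 'I_D -> V) :
  lam (\sum_j c j *: x j) = \sum_j c j * lam (x j).
Proof. by rewrite (lin_sum hl); apply: eq_bigr => j _; rewrite (linZ hl). Qed.

Lemma Th_L3 t : L3 F (Th t).
Proof.
rewrite /L3 /=; apply: span_sub; exists (lbr (fp (idx t.1.1)) (fp (idx t.1.2))), (fp (idx t.2)).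
split => //; apply: span_sub; by exists (fp (idx t.1.1)), (fp (idx t.1.2)).
Qed.

Lemma U_L3 q r : L3 F (U q r).
Proof.
rewrite /L3 /=; apply: span_sub; exists (lbr (Wt 0) (fp q)), (fp r).
split => //; apply: span_sub; by exists (Wt 0), (fp q).
Qed.

Lemma lamA_lin a b l : forall (al : K) (x y : F),
  (c3 (phiA (al *: x + y)) a b l : K^o) = al *: (c3 (phiA x) a b l : K^o) + c3 (phiA y) a b l.
Proof. by move=> al x y; rewrite (phi_lin homA) c3_lin. Qed.

Lemma hall_indep D (ts : 'I_D -> trip) (tsinj : injective ts) (hts : forall j, hallt (ts j))
  (c : 'I_D -> K) (v : F) :
  (forall a b l, c3 (phiA v) a b l = 0) ->
  RFF (\sum_j c j *: Th (ts j) + v) -> forall i, c i = 0.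
Proof.
move=> hv H i; have := A_RFF H (pw (ts i)).1.1 (pw (ts i)).1.2 (pw (ts i)).2.
rewrite (linD (lamA_lin _ _ _)) hv addr0 (ev_sum (lamA_lin _ _ _)).
rewrite (bigD1 i) //= big1 ?addr0.
  by rewrite priv_val // eqxx => /eqP; rewrite mulf_eq0 (negbTE (sgn_neq0 _)) orbF => /eqP.
move=> j /negbTE ji; rewrite priv_val //.
by rewrite (inj_eq tsinj) ji mulr0.
Qed.

Lemma RF3_of_L3 u : L3 F u -> R u /\ L3 F u.
Proof. by move=> h; split => //; apply: R_F3. Qed.

Lemma spanning D (xs : 'I_D -> F) :
  (forall t, hallt t -> Q xs (Th t)) -> (forall q r, Q xs (T zN q r)) ->
  forall u, R u /\ L3 F u -> exists (c : 'I_D -> K) (w : F),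
     RFF w /\ u = \sum_(i < D) c i *: xs i + w.
Proof.
move=> Hh Hz u [_ Lu]; have [c Hc] := Q_F3 (fun i j l h => Hh (i, j, l) h) Hz Lu.
by exists c, (u - \sum_i c i *: xs i); split => //; rewrite addrC subrK.
Qed.

Lemma final_big (m2 : (1 < m)%N) : two_nil_mult_abelian_of_dim pi #|HT|.
Proof.
pose ts (i : 'I_#|HT|) : trip := enum_val i.
have hts j : hallt (ts j) by have := enum_valP j; rewrite inE.
split.
  by move=> a b [Ra _] [_ Lb]; exact: RF3_br Ra Lb.
exists (fun i => Th (ts i)); split; [|split].
- by move=> i; apply: RF3_of_L3; apply: Th_L3.
- move=> c Hc; apply: (hall_indep (@enum_val_inj _ _) hts (v := 0)).
    by move=> *; rewrite (lin0 (phi_lin homA)) c3_0.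
  by rewrite addr0.
- apply: spanning => [t ht|q r]; last exact: Qz_big.
  have tin : t \in HT by rewrite inE.
  rewrite -(enum_rankK_in tin tin); exact: (Q_xs (fun i => Th (ts i))).
Qed.

Lemma lamB_lin (phiB : F -> CL K 2 4) (homB : lie_hom phiB) a b l o : forall (al : K) (x y : F),
  (c4 (phiB (al *: x + y)) a b l o : K^o) = al *: (c4 (phiB x) a b l o : K^o) + c4 (phiB y) a b l o.
Proof. by move=> al x y; rewrite (phi_lin homB) c4_lin. Qed.

Lemma final_one (m_1 : m = 1%N) (phiB : F -> CL K 2 4) (homB : lie_hom phiB)
  (phiB_iota : forall x, phiB (iota x) = ellB (pi (iota x))) :
  two_nil_mult_abelian_of_dim pi (#|HT| + 3).
Proof.
pose ts (i : 'I_#|HT|) : trip := enum_val i.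
have hts j : hallt (ts j) by have := enum_valP j; rewrite inE.
pose xs (i : 'I_(#|HT| + 3)) := match split i with inl j => Th (ts j) | inr e => Uext e end.
have xsl j : xs (lshift 3 j) = Th (ts j) by rewrite /xs (unsplitK (inl j)).
have xsr e : xs (rshift #|HT| e) = Uext e by rewrite /xs (unsplitK (inr e)).
split.
  by move=> a b [Ra _] [_ Lb]; exact: RF3_br Ra Lb.
exists xs; split; [|split].
- move=> i; apply: RF3_of_L3; rewrite /xs; case: (split i) => j; [apply: Th_L3|apply: U_L3].
- move=> c Hc.
  have E : \sum_i c i *: xs i = \sum_j c (lshift 3 j) *: Th (ts j)
        + \sum_e c (rshift #|HT| e) *: Uext e.
    by rewrite big_split_ord /=; congr (_ + _); apply: eq_bigr => j _; rewrite ?xsl ?xsr.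
  have Hc' := Hc; rewrite E in Hc'.
  have hl : forall j, c (lshift 3 j) = 0.
    apply: (hall_indep (@enum_val_inj _ _) hts _ Hc') => a b l.
    rewrite (ev_sum (lamA_lin _ _ _)) big1 // => e _; by rewrite A_U mulr0.
  have hr : forall e, c (rshift #|HT| e) = 0.
    move=> e; have := B_RFF m_1 homB phiB_iota Hc' (wext e).1.1.1 (wext e).1.1.2 (wext e).1.2 (wext e).2.
    rewrite (linD (lamB_lin homB _ _ _ _)) !(ev_sum (lamB_lin homB _ _ _ _)).
    rewrite big1 ?add0r; last by move=> j _; rewrite hl mul0r.
    rewrite (bigD1 e) //= big1 ?addr0.
      rewrite (Uext_val m_1 homB phiB_iota) eqxx => /eqP; rewrite mulf_eq0 => /orP[/eqP //|].
      by case: ifP => _; rewrite ?oppr_eq0 oner_eq0.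
    by move=> e' /negbTE ne; rewrite (Uext_val m_1 homB phiB_iota) ne mulr0.
  move=> i; rewrite -(splitK i); case: (split i) => j /=; [exact: hl|exact: hr].
- apply: spanning => [t ht|q r].
    have tin : t \in HT by rewrite inE.
    rewrite -(enum_rankK_in tin tin) -/(ts _) -xsl; exact: Q_xs.
  apply: Qz_one => // q' r' hq hr hqr.
  have Ex : forall p : 'I_N, p = 0 :> nat -> p = xN 0.
    by move=> p hp; apply: val_inj; rewrite /= /xN inord_val //; lia.
  have Ey : forall p : 'I_N, p = 1 :> nat -> p = yN 0.
    by move=> p hp; apply: val_inj; rewrite /= /yN inord_val //; lia.
  have [e He] : exists e : 'I_3, U q' r' = Uext e.
    have U0 : Uext (Ordinal (isT : (0 < 3)%N)) = U (xN 0) (xN 0) by [].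
    have U1 : Uext (Ordinal (isT : (1 < 3)%N)) = U (xN 0) (yN 0) by [].
    have U2 : Uext (Ordinal (isT : (2 < 3)%N)) = U (yN 0) (yN 0) by [].
    case: (ltnP q' 1) => h1.
      rewrite (Ex q'); last by lia.
      case: (ltnP r' 1) => h2.
        by exists (Ordinal (isT : (0 < 3)%N)); rewrite U0 (Ex r') //; lia.
      by exists (Ordinal (isT : (1 < 3)%N)); rewrite U1 (Ey r') //; lia.
    by exists (Ordinal (isT : (2 < 3)%N)); rewrite U2 (Ey q') 1?(Ey r') //; lia.
  rewrite He -xsr; exact: Q_xs.
Qed.
End Main.

Lemma dim_le (K : fieldType) (L : lie_algebra K) (N n : nat) (f : L -> 'rV[K]_N) (g : 'rV[K]_N -> L)
  (gK : cancel g f) (flin : forall (a : K) (x y : L), f (a *: x + y) = a *: f x + f y)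
  (xs : 'I_n -> L)
  (hspan : forall u, setT_ L u -> exists (c : 'I_n -> K) (w : L), w = 0 /\ u = \sum_(i < n) c i *: xs i + w) :
  (N <= n)%N.
Proof.
pose M : 'M[K]_(n, N) := \matrix_(i, j) f (xs i) 0 j.
have sub1 : (1%:M <= M)%MS.
  apply/row_subP => p; rewrite row1.
  have [c [w [Ew E]]] := hspan (g 'e_p) I.
  have -> : ('e_p : 'rV[K]_N) = (\row_i c i) *m M.
    rewrite mulmx_sum_row -[LHS]gK E Ew addr0 (lin_sum flin); apply: eq_bigr => i _.
    rewrite (linZ flin) !mxE; congr (_ *: _); apply/rowP => j; by rewrite !mxE.
  exact: submxMl.
have := mxrankS sub1; rewrite mxrank1 => h; exact: leq_trans h (rank_leq_row M).
Qed.


End Aux.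
Import Aux.
Import GRing.Theory.
Local Open Scope ring_scope.

Theorem theorem2p13 (K : fieldType) (L : lie_algebra K) (n m : nat) :
  sdim (setT_ L) n ->
  nilpotent L ->
  sdim (L2 L) 1 ->
  (1 <= m)%N ->
  iso_heis_ab L m (n - 2 * m - 1) ->
  forall (F : lie_algebra K) (X : Type) (iota : X -> F) (pi : F -> L),
    free_on iota -> lie_hom pi -> (forall y : L, exists v : F, pi v = y) ->
    two_nil_mult_abelian_of_dim pi
      (if (1 < m)%N then (n * (n - 1) * (n - 2)) %/ 3
       else ((n * (n - 1) * (n - 2)) %/ 3 + 3))%N.
Proof.
move=> [xs [_ [_ xspan]]] _ _ m1 [f [[g fK gK] [flin fbr]]] F X iota pi free pihom pisurj.
have hN := dim_le gK flin xspan.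
have en : n = (m + m + (n - 2 * m - 1)).+1 by lia.
have [fp fpE] : exists fp : 'I_(m + m + (n - 2 * m - 1)).+1 -> F, forall p, pi (fp p) = g 'e_p.
  by apply: (@fin_all_exists _ (fun _ => F) (fun p v => pi v = g 'e_p)) => p; apply: pisurj.
have [phiA [homA [phiA_iota _]]] :=
  free (CL K (m + m + (n - 2 * m - 1)) 4) (fun x => ellA f (pi (iota x))).
have cH : (3 * #|HT m (n - 2 * m - 1)| = n * (n - 1) * (n - 2))%N.
  rewrite (count_hall (m + m + (n - 2 * m - 1))) {3 4 5}en; lia.
have eD : ((n * (n - 1) * (n - 2)) %/ 3 = #|HT m (n - 2 * m - 1)|)%N by rewrite -cH mulKn.
rewrite eD; case: (ltnP 1 m) => hm.
  exact: (final_big m1 fK gK flin fbr pihom fpE free homA phiA_iota hm).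
have m_1 : m = 1%N by lia.
have [phiB [homB [phiB_iota _]]] := free (CL K 2 4) (fun x => ellB f (pi (iota x))).
exact: (final_one m1 fK gK flin fbr pihom fpE free homA phiA_iota m_1 homB phiB_iota).
Qed.
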